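(* Let $G$ be a periodic group and let $N$ be a normal subgroup of $G$. Assume that for every $x\in G$ the subgroup $[N,x]$ is a Chernikov group, and let $R_x$ denote its radicable part. Then the subgroup $R$ generated by all the subgroups $R_x$ ($x\in G$) is a radicable abelian normal subgroup of $G$.
   Context: For a subgroup $N$ and element $x$ of a group $G$, $[N,x]$ is the subgroup generated by all commutators $[a,x]=a^{-1}x^{-1}ax$ with $a\in N$. A group is radicable if every equation $x^r=a$ ($r$ a positive integer, $a$ in the group) has a solution in the group. A Chernikov group $H$ has a radicable abelian normal subgroup $R$ (its radicable part) which is a direct product of finitely many Prüfer groups $C_{p^\infty}$ and with $H/R$ finite. *)

(* Defs.v *)
From HB Require Import structures.
From mathcomp Require Import all_boot all_order all_algebra algC.

Set Implicit Arguments.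
Unset Strict Implicit.
Unset Printing Implicit Defensive.

(* Possibly infinite groups: MathComp's [groupType] (boot/monoid.v).
   Subsets of a group are Prop-valued predicates [T -> Prop]. *)
Local Open Scope group_scope.

Section GroupDefs.
Variable T : groupType.

Definition subset (A B : T -> Prop) : Prop := forall x, A x -> B x.

Definition is_subgroup (H : T -> Prop) : Prop :=
  [/\ H 1, (forall x y, H x -> H y -> H (x * y)) & (forall x, H x -> H x^-1)].

Definition generated (A : T -> Prop) : T -> Prop :=
  fun x => forall H, is_subgroup H -> subset A H -> H x.

(* [N, x] = < [a, x] | a in N >, with [a, x] = a^-1 x^-1 a x *)
Definition commN (N : T -> Prop) (x : T) : T -> Prop :=
  generated (fun c => exists a, N a /\ c = [~ a, x]).

Definition periodic_group : Prop := forall x : T, exists n, (0 < n)%N /\ x ^+ n = 1.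

Definition normal_subgroup (K : T -> Prop) : Prop :=
  is_subgroup K /\ forall g k, K k -> K (k ^ g).

Definition normal_in (K H : T -> Prop) : Prop :=
  [/\ is_subgroup K, subset K H & forall h k, H h -> K k -> K (k ^ h)].

Definition abelian_subgroup (H : T -> Prop) : Prop :=
  forall a b, H a -> H b -> a * b = b * a.

Definition radicable (H : T -> Prop) : Prop :=
  forall (r : nat) a, (0 < r)%N -> H a -> exists y, H y /\ y ^+ r = a.

(* Prüfer group C_{p^oo}, modelled as the multiplicative group of all complex
   p-power roots of unity (in algC); P is a Prüfer p-subgroup if it is the
   image of an injective multiplicative map from that group. *)
Definition pPowerRoot (p : nat) (z : algC) : Prop :=
  exists n : nat, (z ^+ (expn p n))%R = 1%R.

Definition prufer (p : nat) (P : T -> Prop) : Prop :=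
  prime p /\
  exists f : algC -> T,
    [/\ (forall z w, pPowerRoot p z -> pPowerRoot p w -> f z = f w -> z = w),
        (forall z w, pPowerRoot p z -> pPowerRoot p w -> f (z * w)%R = f z * f w),
        (forall z, pPowerRoot p z -> P (f z)) &
        (forall y, P y -> exists2 z, pPowerRoot p z & f z = y)].

Fixpoint gprod (n : nat) (f : nat -> T) : T :=
  match n with
  | 0 => 1
  | n'.+1 => gprod n' f * f n'
  end.

Definition dprod_prufer (R : T -> Prop) : Prop :=
  exists (k : nat) (ps : nat -> nat) (P : nat -> T -> Prop),
    [/\ (forall i, (i < k)%N -> prufer (ps i) (P i)),
        (forall i j a b, (i < k)%N -> (j < k)%N -> i <> j -> P i a -> P j b ->
            a * b = b * a),
        (forall x, R x <-> exists f : nat -> T,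
             (forall i, (i < k)%N -> P i (f i)) /\ x = gprod k f) &
        (forall f g : nat -> T,
             (forall i, (i < k)%N -> P i (f i)) ->
             (forall i, (i < k)%N -> P i (g i)) ->
             gprod k f = gprod k g -> forall i, (i < k)%N -> f i = g i)].

Definition finite_index (R H : T -> Prop) : Prop :=
  exists s : seq T, forall h, H h -> exists t, t \in s /\ R (t^-1 * h).

(* H is a Chernikov group and R is its radicable part: R is a radicable abelian
   normal subgroup of H which is a direct product of finitely many Prüfer
   groups, with H/R finite. *)
Definition chernikov_radicable_part (H R : T -> Prop) : Prop :=
  [/\ normal_in R H, abelian_subgroup R, radicable R, dprod_prufer R
    & finite_index R H].

End GroupDefs.

(* Main.v *)
Require Import Defs.
From mathcomp Require Import all_boot all_algebra algC.
From Stdlib Require Import ClassicalEpsilon.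
Set Implicit Arguments.
Unset Strict Implicit.
Local Open Scope group_scope.

Section Aux.
Variable T : groupType.
Implicit Types (A B H N R D : T -> Prop).

Lemma gen_sub A : is_subgroup (generated A).
Proof.
split.
- by move=> H [H1 _ _].
- by move=> x y Hx Hy H HH HA; case: (HH) => _ HM _; apply: (HM); [apply: Hx|apply: Hy].
- by move=> x Hx H HH HA; case: (HH) => _ _ HV; apply: (HV); apply: Hx.
Qed.

Lemma gen_incl A : Defs.subset A (generated A).
Proof. by move=> x Ax H _ HA; apply: HA. Qed.

Lemma gen_min A H : is_subgroup H -> Defs.subset A H -> Defs.subset (generated A) H.
Proof. by move=> HH HA x Gx; apply: Gx. Qed.

Lemma subX H x n : is_subgroup H -> H x -> H (x ^+ n).
Proof.
move=> [H1 HM HV] Hx; elim: n => [|n IH]; first by [].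
by rewrite expgS; apply: (HM).
Qed.

Lemma subJ H x g : is_subgroup H -> H x -> H g -> H (x ^ g).
Proof.
move=> [H1 HM HV] Hx Hg; rewrite conjgE; apply: (HM); first exact: HV.
exact: (HM).
Qed.

Lemma gen_conj A B g : (forall a, A a -> generated B (a ^ g)) ->
  forall z, generated A z -> generated B (z ^ g).
Proof.
move=> HAB z Gz.
apply: (@gen_min A (fun z => generated B (z ^ g))) Gz => //.
have [G1 GM GV] := gen_sub B.
split.
- by rewrite conj1g.
- by move=> x y Hx Hy; rewrite conjMg; apply: GM.
- by move=> x Hx; rewrite conjVg; apply: GV.
Qed.

Lemma commN_conj N x g : normal_subgroup N ->
  forall z, commN N x z -> commN N (x ^ g) (z ^ g).
Proof.
move=> [_ NJ]; apply: gen_conj => c [a [Na ->]].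
apply: gen_incl; exists (a ^ g); split; first exact: NJ.
by rewrite conjRg.
Qed.

Lemma comm_identity (b a x : T) : [~ b, x] ^ a = [~ b * a, x] * [~ a, x]^-1.
Proof.
rewrite /commg /conjg !invgM !invgK !mulgA.
by rewrite !mulgK.
Qed.


Lemma commN_norm N x a : normal_subgroup N -> N a ->
  forall z, commN N x z -> commN N x (z ^ a).
Proof.
move=> [[N1 NM NV] NJ] Na; apply: gen_conj => c [b [Nb ->]].
rewrite comm_identity.
have [G1 GM GV] := gen_sub (fun c => exists a0, N a0 /\ c = [~ a0, x]).
rewrite /commN; apply: GM; first by apply: gen_incl; exists (b * a); split => //; exact: NM.
by apply: GV; apply: gen_incl; exists a.
Qed.

Lemma commN_sub N x : normal_subgroup N -> Defs.subset (commN N x) N.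
Proof.
move=> [[N1 NM NV] NJ]; apply: gen_min => //.
move=> c [a [Na ->]]; rewrite commgEl; apply: NM; [exact: NV | exact: NJ].
Qed.

Lemma pigeon (f : nat -> T) (s : seq T) :
  (forall i, i <= size s -> f i \in s) ->
  exists i j, [/\ i < j, j <= size s & f i = f j].
Proof.
move=> Hf; set t := mkseq f (size s).+1.
have : ~~ uniq t.
  apply/negP => Ut.
  suff Hsub : {subset t <= s} by have := uniq_leq_size Ut Hsub; rewrite /t size_mkseq ltnn.
  by move=> y /mapP [i]; rewrite mem_iota add0n => /andP [_ Hi] ->; apply: Hf.
case/(uniqPn 1) => i [j [Hij Hj]]; rewrite size_mkseq in Hj.
rewrite !nth_mkseq // => [Heq|]; last exact: ltn_trans Hij Hj.
by exists i, j; split.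
Qed.

Lemma conj_period (b c : T) i j : i < j -> b ^ (c ^+ i) = b ^ (c ^+ j) ->
  b ^ (c ^+ (j - i)) = b.
Proof.
move=> Hij Heq; move: Heq; rewrite -{1}(subnK (ltnW Hij)) expgnDr conjgM => /conjg_inj.
by move=> <-.
Qed.

Lemma conj_periodM (b c : T) d q : b ^ (c ^+ d) = b -> b ^ (c ^+ (d * q)) = b.
Proof.
move=> Hd; elim: q => [|q IH]; first by rewrite muln0 expg0 conjg1.
by rewrite mulnS expgnDr conjgM Hd.
Qed.


Lemma rad_max H R D : is_subgroup H -> chernikov_radicable_part H R ->
  Defs.subset D H -> radicable D -> Defs.subset D R.
Proof.
move=> HH [[RS RH RN] Rab Rrad Rdp [s Hs]] DH Drad.
have key : forall z, H z -> exists e, [/\ 0 < e, e <= size s & R (z ^+ e)].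
  move=> z Hz.
  have Hi : forall i, exists t, t \in s /\ R (t^-1 * z ^+ i).
    by move=> i; apply: Hs; apply: subX.
  pose f i := proj1_sig (constructive_indefinite_description _ (Hi i)).
  have Hf i : f i \in s /\ R ((f i)^-1 * z ^+ i).
    exact: (proj2_sig (constructive_indefinite_description _ (Hi i))).
  have [i [j [Hij Hj Heq]]] := @pigeon f s (fun i _ => (Hf i).1).
  exists (j - i); split; [by rewrite subn_gt0 | exact: leq_trans (leq_subr _ _) Hj |].
  have [_ R1] := Hf i; have [_ R2] := Hf j; rewrite -Heq in R2.
  case: RS => _ RM RV.
  have := RM _ _ (RV _ R1) R2.
  have -> : z ^+ j = z ^+ i * z ^+ (j - i) by rewrite -expgnDr subnKC // ltnW.
  by rewrite invgM invgK !mulgA mulgK mulVg mul1g.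
move=> d Dd.
have [y [Dy Hy]] := Drad (size s)`! d (fact_gt0 _) Dd.
have [e [e0 eS Re]] := key y (DH y Dy).
have dv : e %| (size s)`! by apply: dvdn_fact; rewrite e0 eS.
by rewrite -Hy -(divnK dv) mulnC expgnA; apply: subX.
Qed.

Lemma rad_conj H R H' R' g : is_subgroup H' ->
  chernikov_radicable_part H R -> chernikov_radicable_part H' R' ->
  (forall z, H z -> H' (z ^ g)) -> forall u, R u -> R' (u ^ g).
Proof.
move=> HH' CR CR' HHg u Ru.
have [[RS RH RN] Rab Rrad _ _] := CR.
apply: (@rad_max H' R' (fun z => R (z ^ g^-1))) => //.
- by move=> z Rz; rewrite -(conjgKV g z); apply: HHg; apply: RH.
- move=> r d r0 Rd; have [y [Ry Hy]] := Rrad r _ r0 Rd.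
  exists (y ^ g); split; first by rewrite conjgK.
  by rewrite -conjXg Hy conjgKV.
- by rewrite conjgK.
Qed.


Lemma prufer_facts p P : prufer p P ->
  [/\ P 1, (forall u v, P u -> P v -> P (u * v)), (forall u n, P u -> P (u ^+ n))
    & (forall n, 0 < n -> exists s : seq T, forall u, P u -> u ^+ n = 1 -> u \in s)].
Proof.
move=> [pp [phi [inj hom inP surj]]].
have pr1 : pPowerRoot p 1%R by exists 0; rewrite GRing.expr1n.
have prM : forall z w, pPowerRoot p z -> pPowerRoot p w -> pPowerRoot p (z * w)%R.
  move=> z w [a Ha] [b Hb]; exists (a + b).
  by rewrite expnD GRing.exprMn GRing.exprM Ha GRing.expr1n GRing.mul1r mulnC GRing.exprM Hb GRing.expr1n.
have prX : forall z n, pPowerRoot p z -> pPowerRoot p (z ^+ n)%R.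
  move=> z n Hz; elim: n => [|n IH]; first by rewrite GRing.expr0.
  by rewrite GRing.exprS; apply: prM.
have phi1 : phi 1%R = 1.
  have := hom 1%R 1%R pr1 pr1; rewrite GRing.mul1r => h.
  by apply: (@mulgI _ (phi 1%R)); rewrite mulg1 -h.
have phiX : forall z n, pPowerRoot p z -> phi (z ^+ n)%R = phi z ^+ n.
  move=> z n Hz; elim: n => [|n IH]; first by rewrite GRing.expr0 phi1.
  rewrite GRing.exprS hom //; last exact: prX.
  by rewrite [phi (z ^+ n)%R]IH expgS.
split.
- by rewrite -phi1; apply: inP.
- move=> u v Pu Pv; have [z pz <-] := surj u Pu; have [w pw <-] := surj v Pv.
  by rewrite -hom //; apply: inP; apply: prM.
- move=> u n Pu; have [z pz <-] := surj u Pu.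
  by rewrite -phiX //; apply: inP; apply: prX.
move=> n n0.
have [rs Hrs] := closed_field_poly_normal ('X^n - 1%:P : {poly algC})%R.
rewrite (monicP (monicXnsubC 1%R n0)) GRing.scale1r in Hrs.
exists (map phi rs) => u Pu Hu.
have [z pz Hzu] := surj u Pu; rewrite -Hzu; apply: map_f.
have Hz : (z ^+ n)%R = 1%R.
  by apply: inj; [exact: prX | exact: pr1 | rewrite phiX // Hzu Hu phi1].
rewrite -root_prod_XsubC -Hrs /root.
by rewrite !hornerE Hz GRing.subrr eqxx.
Qed.


Lemma commuteMl (x z y : T) : commute x y -> commute z y -> commute (x * z) y.
Proof. by move=> h1 h2; apply: commute_sym; apply: commuteM; apply: commute_sym. Qed.

Lemma gprod_commute k f (y : T) : (forall i, i < k -> commute (f i) y) ->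
  commute (gprod k f) y.
Proof.
elim: k => [|k IH] H /=; first exact: commute_sym (commute1 y).
apply: commuteMl; first by apply: IH => i Hi; apply: H; exact: leqW.
exact: H.
Qed.

Lemma gprodX k (f : nat -> T) n :
  (forall i j, i < k -> j < k -> commute (f i) (f j)) ->
  gprod k f ^+ n = gprod k (fun i => f i ^+ n).
Proof.
elim: k => [|k IH] H /=; first exact: expg1n.
rewrite expgMn; last by apply: gprod_commute => i Hi; apply: H => //; exact: leqW.
by rewrite IH // => i j Hi Hj; apply: H; exact: leqW.
Qed.

Lemma gprod1 k : gprod k (fun _ => 1 : T) = 1.
Proof. by elim: k => [|k IH] //=; rewrite IH mulg1. Qed.

Lemma omega_finite R n : dprod_prufer R -> 0 < n ->
  exists s : seq T, forall z, R z -> z ^+ n = 1 -> z \in s.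
Proof.
move=> [k [ps [P [Hpr Hcm HR Huniq]]]] n0.
have Hs : forall i, i < k -> exists s : seq T, forall u, P i u -> u ^+ n = 1 -> u \in s.
  by move=> i Hi; have [_ _ _ h] := @prufer_facts _ _ (Hpr i Hi); apply: h.
have step : forall j, j <= k -> exists L : seq T, forall f,
    (forall i, i < j -> P i (f i) /\ f i ^+ n = 1) -> gprod j f \in L.
  elim=> [|j IH] Hj; first by exists [:: (1 : T)] => f _; rewrite inE.
  have [L HL] := IH (ltnW Hj); have [s Hs'] := Hs j Hj.
  exists [seq x * y | x <- L, y <- s] => f Hf /=.
  apply: allpairs_f; first by apply: HL => i Hi; apply: Hf; exact: leqW.
  by have [h1 h2] := Hf j (ltnSn j); apply: Hs'.
have [L HL] := step k (leqnn k).
exists L => z Rz Hz.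
have [f [Pf Ez]] := (HR z).1 Rz.
rewrite Ez; apply: HL => i Hi; split; first exact: Pf.
have Hc : forall i j, i < k -> j < k -> commute (f i) (f j).
  move=> i0 j0 Hi0 Hj0; case: (eqVneq i0 j0) => [->|ne]; first exact: commute_refl.
  have ne' : i0 <> j0 by apply/eqP.
  exact: (Hcm i0 j0 _ _ Hi0 Hj0 ne' (Pf i0 Hi0) (Pf j0 Hj0)).
apply: (Huniq (fun i => f i ^+ n) (fun _ => 1)) => //.
- by move=> i0 Hi0; have [_ _ h _] := @prufer_facts _ _ (Hpr i0 Hi0); apply: h; apply: Pf.
- by move=> i0 Hi0; have [h _ _ _] := @prufer_facts _ _ (Hpr i0 Hi0).
- by rewrite gprod1 -gprodX // -Ez.
Qed.


Lemma cent_sub (u : T) : is_subgroup (fun v => commute u v).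
Proof.
split.
- exact: commute1.
- by move=> x y hx hy; apply: commuteM.
- by move=> x hx; apply: commuteV.
Qed.

End Aux.

Unset Implicit Arguments.
Set Strict Implicit.

Theorem lemma2p4 (T : groupType) (N : T -> Prop) (Rx : T -> T -> Prop) :
  periodic_group T ->
  normal_subgroup N ->
  (forall x : T, chernikov_radicable_part (commN N x) (Rx x)) ->
  let R := generated (fun y => exists x, Rx x y) in
  [/\ is_subgroup R, radicable R, abelian_subgroup R & normal_subgroup R].
Proof.
move=> Hper HN Hch R.
have HS x : is_subgroup (commN N x) by apply: gen_sub.
have RxS x : Defs.subset (Rx x) (commN N x) by have [[_ h _] _ _ _ _] := Hch x.
have RxG x : is_subgroup (Rx x) by have [[h _ _] _ _ _ _] := Hch x.
have norm : forall x g u, Rx x u -> Rx (x ^ g) (u ^ g).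
  move=> x g; apply: (rad_conj (HS (x ^ g)) (Hch x) (Hch (x ^ g))).
  exact: commN_conj.
have normR : forall x y a u, Rx x a -> Rx y u -> Rx y (u ^ a).
  move=> x y a u Ha; apply: (rad_conj (HS y) (Hch y) (Hch y)).
  by apply: commN_norm => //; exact: (commN_sub HN (RxS x a Ha)).
have comm : forall x y a b, Rx x a -> Rx y b -> a * b = b * a.
  move=> x y a b Ha Hb.
  have [n [n0 Hbn]] := Hper b.
  have [_ _ _ Hdp _] := Hch y.
  have [s Hs] := omega_finite Hdp n0.
  have [_ _ Rrad _ _] := Hch x.
  have [c [Hc Hca]] := Rrad (size s)`! a (fact_gt0 _) Ha.
  have Hf : forall i, i <= size s -> b ^ (c ^+ i) \in s.
    move=> i _; apply: Hs; first by apply: (normR x) Hb; apply: subX.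
    by rewrite -conjXg Hbn conj1g.
  have [i [j [Hij Hj Heq]]] := pigeon Hf.
  have h1 := conj_period Hij Heq.
  have dv : (j - i) %| (size s)`!.
    by apply: dvdn_fact; rewrite subn_gt0 Hij (leq_trans (leq_subr _ _) Hj).
  have := conj_periodM ((size s)`! %/ (j - i)) h1.
  rewrite mulnC divnK // Hca => hb.
  by rewrite -{1}hb conjgE mulVKg.
have RG : is_subgroup R by apply: gen_sub.
have ab : abelian_subgroup R.
  have gc : forall u v, (exists x, Rx x u) -> R v -> commute u v.
    move=> u v [x Hu] Rv; apply: (gen_min (cent_sub u) _ Rv).
    by move=> w [y Hw]; exact: comm Hu Hw.
  move=> a b Ra Rb.
  apply: commute_sym; apply: (gen_min (cent_sub b) _ Ra).
  by move=> u Hu; apply: commute_sym; apply: gc.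
split => //.
- pose S := fun z => R z /\ forall r, 0 < r -> exists y, R y /\ y ^+ r = z.
  have SG : is_subgroup S.
    case: RG => R1 RM RV.
    split.
    + by split => // r _; exists 1; split => //; exact: expg1n.
    + move=> u v [Ru hu] [Rv hv]; split; first exact: RM.
      move=> r r0; have [y1 [Ry1 e1]] := hu r r0; have [y2 [Ry2 e2]] := hv r r0.
      exists (y1 * y2); split; first exact: RM.
      by rewrite expgMn ?e1 ?e2 //; apply: ab.
    + move=> u [Ru hu]; split; first exact: RV.
      move=> r r0; have [y [Ry e]] := hu r r0.
      by exists y^-1; split; [exact: RV | rewrite expVgn e].
  have AS : Defs.subset (fun y => exists x, Rx x y) S.
    move=> u [x Hu]; split; first by apply: gen_incl; exists x.
    move=> r r0; have [_ _ Rrad _ _] := Hch x.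
    have [y [Hy e]] := Rrad r u r0 Hu.
    by exists y; split => //; apply: gen_incl; exists x.
  move=> r a r0 Ra; have [_ h] := gen_min SG AS Ra.
  exact: h.
- split => // g k Rk.
  apply: (gen_conj _ Rk) => a [x Ha]; apply: gen_incl.
  by exists (x ^ g); apply: norm.
Qed.
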